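(* Let $F:\mathbb{R}^n\to\mathbb{R}^n$ be locally Lipschitz, $X^*=\{x:F(x)=0\}$, $x^*\in X^*$, $\mathcal{M}$ a smooth embedded submanifold of $\mathbb{R}^n$ containing $x^*$, and $\tilde X^*=X^*\cap\mathcal{M}$. Assume (A1), (A2), (A3) below, and let $b$ be as defined below. Let $q\in(1,2]$, $L_3>0$. For $x_k\in\mathcal{M}$ let $\mu_k=\|F(x_k)\|$, $J_k\in\partial_BF(x_k)$, $P_k=P(x_k)$, and let $d_k$ satisfy $(J_kP_k+\mu_kI)d_k=-F(x_k)+r_k$ where $\|r_k\|/\mu_k\le L_3\|F(x_k)\|^q$. Then there is a constant $c_1>0$ such that whenever $x_k\in\mathcal{M}\cap\bar B(x^*,b/2)$, $$\|d_k\|\le c_1\,\mathrm{dist}(x_k,\tilde X^* )+\mu_k^{-1}\|r_k\|.$$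
   Context: $\partial_BF(x)=\{\lim_kJ(x^k):x^k\to x, F \text{ differentiable at } x^k\}$ (B-Jacobian). $P(x)$ is the matrix of the orthogonal projection onto the tangent space $T_x\mathcal{M}$. (A1): there are $b_1>0$, $L_2>0$ such that $F$ is $L_2$-Lipschitz on $\bar B(x^*,b_1)$, and a constant $L_1>0$ such that for all $x,y\in\mathcal{M}\cap\bar B(x^*,b_1)$ and every $J(x)\in\partial_BF(x)$: $\|F(y)-F(x)-J(x)(y-x)\|\le L_1\|y-x\|^2$ and $\|F(y)-F(x)-J(x)P(x)(y-x)\|\le L_1\|y-x\|^2$. (A2): there is $b_2>0$ such that for all $x\in\mathcal{M}\cap\bar B(x^*,b_2)$ and all $J(x)\in\partial_BF(x)$, $\|(J(x)P(x)+\mu(x)I)^{-1}\|\le\mu(x)^{-1}$, $\mu(x)=\|F(x)\|$. (A3): there are $b_3>0$, $\gamma>0$ with $\|F(x)\|\ge\gamma\,\mathrm{dist}(x,\tilde X^* )$ for all $x\in\mathcal{M}\cap\bar B(x^*,b_3)$. Set $b=\min\{b_2,b_3,\gamma b_1/(2L_1+2L_2+2\gamma+2L_3L_2^q\gamma),1,\gamma/(L_1+L_2+\gamma+L_3L_2^q\gamma)\}$. *)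

(* Defs.v *)
From mathcomp Require Import all_boot all_order all_algebra.
From mathcomp Require Import all_classical all_reals all_analysis.
Set Implicit Arguments. Unset Strict Implicit. Unset Printing Implicit Defensive.
Import Order.TTheory GRing.Theory Num.Theory.
Import numFieldNormedType.Exports.
Local Open Scope classical_set_scope.
Local Open Scope ring_scope.

Section Defs.
Variable R : realType.

Definition enorm n (v : 'cV[R]_n) : R := Num.sqrt (\sum_(i < n) v i 0 ^+ 2).

Definition edot n (u v : 'cV[R]_n) : R := \sum_(i < n) u i 0 * v i 0.

Definition cball n (c : 'cV[R]_n) (r : R) : set 'cV[R]_n :=
  [set x | enorm (x - c) <= r].

Definition edist_set n (x : 'cV[R]_n) (S : set 'cV[R]_n) : R :=
  inf [set enorm (x - y) | y in S].

Definition elipschitz_on n m (F : 'cV[R]_n -> 'cV[R]_m) (L : R) (S : set 'cV[R]_n) :=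
  forall x y, S x -> S y -> enorm (F y - F x) <= L * enorm (y - x).

Definition elocally_lipschitz n m (F : 'cV[R]_n -> 'cV[R]_m) :=
  forall x, exists r : R, exists L : R, 0 < r /\ elipschitz_on F L (cball x r).

Definition jac n m (F : 'cV[R]_n -> 'cV[R]_m) (x : 'cV[R]_n) : 'M[R]_(m, n) :=
  \matrix_(i < m, j < n) (derive F x (delta_mx j 0 : 'cV[R]_n)) i 0.

Definition BJac n m (F : 'cV[R]_n -> 'cV[R]_m) (x : 'cV[R]_n) : set 'M[R]_(m, n) :=
  [set J | exists xs : nat -> 'cV[R]_n,
      (forall k, differentiable F (xs k)) /\
      xs @ \oo --> x /\ (fun k => jac F (xs k)) @ \oo --> J].

Fixpoint iter_dir n m (vs : seq 'cV[R]_n) (f : 'cV[R]_n -> 'cV[R]_m)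
    : 'cV[R]_n -> 'cV[R]_m :=
  match vs with
  | [::] => f
  | v :: vs' => fun x => derive (iter_dir vs' f) x v
  end.

Definition smooth_on n m (U : set 'cV[R]_n) (f : 'cV[R]_n -> 'cV[R]_m) :=
  forall vs : seq 'cV[R]_n, forall x, U x ->
    {for x, continuous (iter_dir vs f)} /\
    forall v, derivable (iter_dir vs f) x v.

Definition embedded_submanifold n (M : set 'cV[R]_n) :=
  exists k : nat, (k <= n)%N /\
  forall p, M p -> exists U : set 'cV[R]_n, open U /\ U p /\
    exists g : 'cV[R]_n -> 'cV[R]_(n - k),
      smooth_on U g /\
      (forall x, U x -> M x -> \rank (jac g x) = (n - k)%N) /\
      (forall x, U x -> (M x <-> g x = 0)).

Definition tangent_space n (M : set 'cV[R]_n) (x : 'cV[R]_n) : set 'cV[R]_n :=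
  [set v | exists gam : R -> 'cV[R]_n,
     gam 0 = x /\ (\forall t \near (0 : R), M (gam t)) /\ is_derive (0 : R) (1 : R) gam v].

Definition orth_proj_onto n (A : 'M[R]_n) (T : set 'cV[R]_n) :=
  forall v, T (A *m v) /\ forall w, T w -> edot (v - A *m v) w = 0.

Definition inv_opnorm_le n (A : 'M[R]_n) (c : R) :=
  A \in unitmx /\ forall v : 'cV[R]_n, enorm (invmx A *m v) <= c * enorm v.

Definition bconst (b1 b2 b3 gam L1 L2 L3 q : R) : R :=
  Num.min b2 (Num.min b3 (Num.min
    (gam * b1 / (2 * L1 + 2 * L2 + 2 * gam + 2 * L3 * powR L2 q * gam))
    (Num.min 1 (gam / (L1 + L2 + gam + L3 * powR L2 q * gam))))).

End Defs.

(* Main.v *)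
Require Import Defs.
From mathcomp Require Import all_boot all_order all_algebra.
From mathcomp Require Import all_classical all_reals all_analysis.
From mathcomp Require Import ring lra.
Import Order.TTheory GRing.Theory Num.Theory.
Import numFieldNormedType.Exports.
Local Open Scope classical_set_scope.
Local Open Scope ring_scope.

Section E.
Variable R : realType.
Variable n : nat.
Implicit Types u v : 'cV[R]_n.

Lemma enorm_ge0 v : 0 <= enorm v.
Proof. exact: sqrtr_ge0. Qed.

Lemma enorm_sq v : enorm v ^+ 2 = \sum_(i < n) v i 0 ^+ 2.
Proof. by rewrite /enorm sqr_sqrtr // sumr_ge0 // => i _; exact: sqr_ge0. Qed.

Lemma enormZ (c : R) v : enorm (c *: v) = `|c| * enorm v.
Proof.
rewrite /enorm.
have -> : \sum_(i < n) (c *: v) i 0 ^+ 2 = c ^+ 2 * \sum_(i < n) v i 0 ^+ 2.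
  by rewrite mulr_sumr; apply: eq_bigr => i _; rewrite mxE exprMn.
by rewrite sqrtrM ?sqr_ge0 // sqrtr_sqr.
Qed.

Lemma enormN v : enorm (- v) = enorm v.
Proof. by rewrite -scaleN1r enormZ normrN normr1 mul1r. Qed.

Lemma enormB u v : enorm (u - v) = enorm (v - u).
Proof. by rewrite -enormN opprB. Qed.

Lemma enorm_eq0 v : enorm v = 0 -> v = 0.
Proof.
move=> h; have h2 : \sum_(i < n) v i 0 ^+ 2 = 0.
  by rewrite -enorm_sq h expr0n.
apply/matrixP => i j; rewrite ord1 mxE.
have /psumr_eq0P H := h2.
have := H (fun i _ => sqr_ge0 (v i 0)) i isT.
by move/eqP; rewrite sqrf_eq0 => /eqP.
Qed.

Lemma cs u v : \sum_(i < n) u i 0 * v i 0 <= enorm u * enorm v.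
Proof.
set a := enorm u; set b := enorm v.
have ha := enorm_ge0 u; have hb := enorm_ge0 v.
have key : 0 <= \sum_(i < n) (u i 0 * b - v i 0 * a) ^+ 2.
  by rewrite sumr_ge0 // => i _; exact: sqr_ge0.
have E : \sum_(i < n) (u i 0 * b - v i 0 * a) ^+ 2 =
   b ^+ 2 * (\sum_(i < n) u i 0 ^+ 2) - 2 * a * b * \sum_(i < n) u i 0 * v i 0 + a ^+ 2 * (\sum_(i < n) v i 0 ^+ 2).
  rewrite !mulr_sumr -!sumrB -big_split /=.
  by apply: eq_bigr => i _; ring.
rewrite -!enorm_sq -/a -/b in E.
rewrite E in key.
have [a0|apos] := eqVneq a 0.
  have u0 := @enorm_eq0 u a0.
  rewrite u0 a0 mul0r big1 // => i _; by rewrite mxE mul0r.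
have [b0|bpos] := eqVneq b 0.
  have v0 := @enorm_eq0 v b0.
  rewrite v0 b0 mulr0 big1 // => i _; by rewrite mxE mulr0.
have ab : 0 < a * b by rewrite mulr_gt0 // lt0r ?apos ?bpos.
nra.
Qed.

Lemma enormD u v : enorm (u + v) <= enorm u + enorm v.
Proof.
rewrite -(@ler_pXn2r _ 2) ?nnegrE ?addr_ge0 ?enorm_ge0 //.
rewrite enorm_sq.
have -> : \sum_(i < n) (u + v) i 0 ^+ 2 = \sum_(i < n) u i 0 ^+ 2 + 2 * \sum_(i < n) u i 0 * v i 0 + \sum_(i < n) v i 0 ^+ 2.
  rewrite mulr_sumr -!big_split /=; apply: eq_bigr => i _; rewrite mxE; ring.
rewrite -!enorm_sq; have := cs u v; nra.
Qed.

End E.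
Arguments enorm_ge0 {R n}.
Arguments enorm_sq {R n}.
Arguments enormZ {R n}.
Arguments enormN {R n}.
Arguments enormB {R n}.
Arguments enorm_eq0 {R n}.
Arguments cs {R n}.
Arguments enormD {R n}.

Theorem lemma5p2 (R : realType) (n : nat) (F : 'cV[R]_n -> 'cV[R]_n)
  (M : set 'cV[R]_n) (P : 'cV[R]_n -> 'M[R]_n) (xstar : 'cV[R]_n)
  (b1 b2 b3 L1 L2 L3 gam q : R) :
  elocally_lipschitz F ->
  F xstar = 0 ->
  embedded_submanifold M -> M xstar ->
  (forall x, M x -> orth_proj_onto (P x) (tangent_space M x)) ->
  (* (A1) *)
  0 < b1 -> 0 < L2 -> 0 < L1 ->
  elipschitz_on F L2 (cball xstar b1) ->
  (forall x y J, M x -> cball xstar b1 x -> M y -> cball xstar b1 y ->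
     BJac F x J ->
     enorm (F y - F x - J *m (y - x)) <= L1 * enorm (y - x) ^+ 2 /\
     enorm (F y - F x - J *m P x *m (y - x)) <= L1 * enorm (y - x) ^+ 2) ->
  (* (A2), required where mu(x) = ||F x|| > 0 *)
  0 < b2 ->
  (forall x J, M x -> cball xstar b2 x -> BJac F x J -> F x != 0 ->
     inv_opnorm_le (J *m P x + (enorm (F x))%:M) (enorm (F x))^-1) ->
  (* (A3) *)
  0 < b3 -> 0 < gam ->
  (forall x, M x -> cball xstar b3 x ->
     gam * edist_set x [set y | F y = 0 /\ M y] <= enorm (F x)) ->
  1 < q -> q <= 2 -> 0 < L3 ->
  exists c1 : R, 0 < c1 /\
    forall (x : 'cV[R]_n) (J : 'M[R]_n) (d r : 'cV[R]_n),
      M x -> cball xstar (bconst b1 b2 b3 gam L1 L2 L3 q / 2) x ->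
      BJac F x J -> F x != 0 ->
      (J *m P x + (enorm (F x))%:M) *m d = - F x + r ->
      enorm r / enorm (F x) <= L3 * powR (enorm (F x)) q ->
      enorm d <= c1 * edist_set x [set y | F y = 0 /\ M y] + (enorm (F x))^-1 * enorm r.
Proof.
move=> _ Fs0 _ Ms _ b10 L20 L10 _ A1 b20 A2 b30 g0 A3 _ _ L30.
set b := bconst b1 b2 b3 gam L1 L2 L3 q.
have pq := @powR_ge0 R L2 q.
set p := powR L2 q in pq.
have bb2 : b <= b2 by rewrite /b /bconst ge_min lexx.
have bb3 : b <= b3 by rewrite /b /bconst ge_min ge_min lexx orbT.
have bb1 : b <= b1 / 2.
  rewrite /b /bconst ge_min ge_min ge_min -/p; apply/orP; right; apply/orP; right;
    apply/orP; left.
  have Dp : 0 < 2 * L1 + 2 * L2 + 2 * gam + 2 * L3 * p * gam.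
    have : 0 <= L3 * p * gam by rewrite !mulr_ge0 // ltW.
    nra.
  rewrite ler_pdivrMr //.
  have : 0 <= L3 * p * gam by rewrite !mulr_ge0 // ltW.
  nra.
exists (2 + L1 / gam); split.
  by rewrite addr_gt0 // divr_gt0.
move=> x J d r Mx xb BJ Fx0 Ad _.
set mu := enorm (F x).
have mu0 : 0 < mu.
  rewrite lt0r enorm_ge0 andbT; apply/eqP => /enorm_eq0 h; by rewrite h eqxx in Fx0.
have bx : enorm (x - xstar) <= b / 2 by [].
have hx1 : cball xstar b1 x by rewrite /cball /=; lra.
have hx2 : cball xstar b2 x by rewrite /cball /=; lra.
have hx3 : cball xstar b3 x by rewrite /cball /=; lra.
set A := J *m P x + mu%:M.
have [uA iA] := A2 x J Mx hx2 BJ Fx0.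
set S := [set y | F y = 0 /\ M y].
set E := [set enorm (x - y) | y in S].
have hE : has_inf E.
  split; first by exists (enorm (x - xstar)), xstar.
  by exists 0 => t [y _ <-]; exact: enorm_ge0.
have D0 : 0 <= edist_set x S.
  by apply: lb_le_inf; [case: hE|move=> t [y _ <-]; exact: enorm_ge0].
have Dle : edist_set x S <= enorm (x - xstar).
  by apply: ge_inf; [case: hE|exists xstar].
have gD := A3 x Mx hx3.
set D := edist_set x S in D0 Dle gD *.
set im := mu^-1.
have im0 : 0 < im by rewrite invr_gt0.
have mim : mu * im = 1 by rewrite mulfV // gt_eqF.
have key : forall y, S y -> cball xstar b1 y ->
    enorm d <= 2 * enorm (x - y) + im * (L1 * enorm (x - y) ^+ 2) + im * enorm r.
  move=> y [Fy My] yb.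
  have [_ A1b] := A1 x y J Mx hx1 My yb BJ.
  set w := y - x in A1b *.
  set e := F y - F x - J *m P x *m w in A1b *.
  have tw : enorm w = enorm (x - y) by rewrite /w enormB.
  have eq1 : - F x + r = e + A *m w - mu *: w + r.
    rewrite /e /A mulmxDl mul_scalar_mx Fy.
    rewrite addrA addrK subrK sub0r //.
  have dE : d = invmx A *m e + w - invmx A *m (mu *: w) + invmx A *m r.
    clearbody e w; by rewrite -[d](mulKmx uA) Ad eq1 !mulmxDr !mulmxN mulKmx.
  have h1 : enorm (invmx A *m e) <= im * (L1 * enorm w ^+ 2).
    apply: le_trans (iA e) _; rewrite ler_pM2l //.
  have h2 : enorm (invmx A *m (mu *: w)) <= enorm w.
    apply: le_trans (iA _) _; rewrite enormZ ger0_norm ?(ltW mu0) // mulrA mulVf ?gt_eqF // mul1r.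
    by [].
  have h3 := iA r; rewrite -/mu -/im -/A in h3.
  rewrite dE; apply: le_trans (enormD _ _) _.
  rewrite -tw.
  have := enormD (invmx A *m e + w) (- (invmx A *m (mu *: w))).
  have := enormD (invmx A *m e) w.
  rewrite enormN -/im.
  lra.
have hK : enorm d <= 2 * D + im * (L1 * D ^+ 2) + im * enorm r.
  apply/ler_addgt0Pr => e e0.
  set k := im * L1.
  have k0 : 0 < k by rewrite mulr_gt0.
  set K0 := 2 + k * (2 * D + 1).
  have K00 : 0 < K0 by rewrite /K0; nra.
  set eps := Num.min 1 (Num.min (b1 / 4) (e / K0)).
  have eps0 : 0 < eps by rewrite /eps !lt_min ltr01 divr_gt0 //= divr_gt0.
  have eps1 : eps <= 1 by rewrite /eps ge_min lexx.
  have eps2 : eps <= b1 / 4 by rewrite /eps ge_min ge_min lexx orbT.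
  have eps3 : eps * K0 <= e.
    have : eps <= e / K0 by rewrite /eps ge_min ge_min lexx !orbT.
    by rewrite ler_pdivlMr.
  have [t [y Sy <-] ht] := inf_adherent eps0 hE.
  have ht' : enorm (x - y) < D + eps by exact: ht.
  clear ht.
  have yb : cball xstar b1 y.
    rewrite /cball /=.
    have -> : y - xstar = (y - x) + (x - xstar) by rewrite addrA subrK.
    apply: le_trans (enormD _ _) _; rewrite (enormB y x).
    lra.
  apply: le_trans (key y Sy yb) _.
  set T := enorm (x - y) in ht' *.
  have T0 : 0 <= T := enorm_ge0 _.
  have h1 : T ^+ 2 <= (D + eps) ^+ 2 by nra.
  have h2 : k * T ^+ 2 <= k * (D + eps) ^+ 2 by rewrite ler_pM2l.
  have h3 : k * eps * eps <= k * eps by rewrite ler_piMr // mulr_ge0 // ltW.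
  have -> : im * (L1 * T ^+ 2) = k * T ^+ 2 by rewrite /k mulrA.
  have -> : im * (L1 * D ^+ 2) = k * D ^+ 2 by rewrite /k mulrA.
  rewrite /K0 in eps3.
  nra.
apply: le_trans hK _.
have ig0 : 0 < gam^-1 by rewrite invr_gt0.
have gig : gam * gam^-1 = 1 by rewrite mulfV // gt_eqF.
have H : gam * D * (im * gam^-1 * L1 * D) <= mu * (im * gam^-1 * L1 * D).
  by rewrite ler_wpM2r // !mulr_ge0 // ltW.
have e1 : gam * D * (im * gam^-1 * L1 * D) = (gam * gam^-1) * (im * (L1 * D ^+ 2)) by ring.
have e2 : mu * (im * gam^-1 * L1 * D) = (mu * im) * (L1 / gam * D) by ring.
rewrite e1 e2 gig mim !mul1r in H.
lra.
Qed.
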